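(* Let $\ell\ge 2$ be an integer and let $\mathbf{a}=(a_1,\ldots,a_\ell)\in\mathbf{Z}^\ell$ with $\sum_{j=1}^\ell a_j=0$. Put $\lambda=\pi_\ell(\mathbf{a})$ and $k=\lambda_1$ (so $\lambda\in\mathcal{C}_\ell^k$). Let $i$ be the largest index such that $a_i=\max\{a_1,\ldots,a_\ell\}$. Then \[ \pi_{\ell-1}^{-1}\big(\Phi_\ell^k(\lambda)\big)=\psi_{\ell-1}^{\,a_i}\big(a_1,\ldots,a_{i-1},a_{i+1},\ldots,a_\ell\big), \] where $\psi_{\ell-1}^{\,a_i}$ denotes the $a_i$-fold iterate of $\psi_{\ell-1}$ (note $a_i\ge 0$).
   Context: Partitions are drawn as Young diagrams in English notation; box $(x,y)$ lies in row $x$ and column $y$. The hook length $h^{\lambda}_{(a,c)}$ of a box $(a,c)$ of $\lambda$ is the number of boxes of $\lambda$ in row $a$ weakly to the right of $(a,c)$ plus the number of boxes of $\lambda$ in column $c$ strictly below $(a,c)$. For an integer $m\ge 1$, a partition is an $m$-core if no box has hook length divisible by $m$. $\mathcal{C}_m$ denotes the set of $m$-cores, $\mathcal{C}_m^k$ those with first part equal to $k$, and $\mathcal{C}_m^{\le k}$ those with first part $\le k$. For $m\ge1$ and $\mathbf{c}=(c_1,\ldots,c_m)\in\mathbf{Z}^m$ with $\sum c_j=0$, let $X(\mathbf{c})=\{rm+(j-1): 1\le j\le m,\ r\in\mathbf{Z},\ r\le c_j\}\subset\mathbf{Z}$, and let $\pi_m(\mathbf{c})$ be the partition whose nonzero parts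 (in weakly decreasing order) are the positive values among the numbers $\#\{y\in\mathbf{Z}\setminus X(\mathbf{c}): y<x\}$, $x\in X(\mathbf{c})$. It is known that $\pi_m$ is a bijection from $\{\mathbf{c}\in\mathbf{Z}^m:\sum c_j=0\}$ onto $\mathcal{C}_m$. For $\lambda\in\mathcal{C}_\ell^k$, $\Phi_\ell^k(\lambda)$ is the partition obtained from the Young diagram of $\lambda$ by deleting every row $x$ with $h^\lambda_{(x,1)}\equiv h^\lambda_{(1,1)}\pmod{\ell}$ (in particular row 1); it is known that $\Phi_\ell^k$ is a bijection $\mathcal{C}_\ell^k\to\mathcal{C}_{\ell-1}^{\le k}$. For $m\ge1$, $\psi_m:\mathbf{Z}^m\to\mathbf{Z}^m$ is the map $\psi_m(c_1,\ldots,c_m)=(c_m+1,c_1,c_2,\ldots,c_{m-1})$. *)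

(* Defs.v *)
From mathcomp Require Import all_boot all_order all_algebra.
Set Implicit Arguments. Unset Strict Implicit. Unset Printing Implicit Defensive.
Import Order.TTheory GRing.Theory Num.Theory.

(* Partitions are sequences of nat (parts, weakly decreasing, positive).
   Rows and columns are 1-indexed as in the paper: row x of lam has
   length nth 0 lam x.-1. *)

(* Vectors c = (c_1,...,c_m) in Z^m are sequences of int of size m;
   c_j is nth 0 c (j-1). *)

Local Open Scope ring_scope.

(* y \in X(c) = { r m + (j-1) : 1 <= j <= m, r <= c_j }  (0-based j here) *)
Definition inX (m : nat) (c : seq int) (y : int) : bool :=
  has (fun j : nat => ((m%:Z %| y - j%:Z)%Z && ((y - j%:Z) %/ m%:Z <= nth 0 c j)%Z))
      (iota 0 m).

(* Window bounds: every integer < lowX is in X(c) (it is <= m * min_j c_j),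
   and every integer >= upX is outside X(c). Hence for x in X(c) the count
   #{y notin X(c) : y < x} equals the count over the finite window [lowX, x),
   and only x in [lowX, upX) can give a positive count. *)
Definition sabs (c : seq int) : int := foldr (fun z acc => `|z| + acc) 0 c.
Definition lowX (m : nat) (c : seq int) : int := - (m%:Z * sabs c).
Definition upX (m : nat) (c : seq int) : int := m%:Z * sabs c + m%:Z.

Definition zrange (L U : int) : seq int :=
  [seq L + i%:Z | i <- iota 0 `|U - L|%N].

Definition gapcount (m : nat) (c : seq int) (x : int) : nat :=
  count (fun y => ~~ inX m c y) (zrange (lowX m c) x).

Definition piM (m : nat) (c : seq int) : seq nat :=
  sort geq [seq n <- [seq gapcount m c x | x <- zrange (lowX m c) (upX m c) & inX m c x]
           | (0 < n)%N].

Local Close Scope ring_scope.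

(* hook length of box (a, c) (1-indexed) of lam:
   boxes in row a weakly right of (a,c) + boxes in column c strictly below *)
Definition hook (lam : seq nat) (a c : nat) : nat :=
  (nth 0 lam a.-1 - c + 1) + count (fun r => c <= r) (drop a lam).

(* Phi_l^k(lam): delete every row x with h_(x,1) = h_(1,1) mod l.
   (The construction does not depend on k = lam_1 beyond the domain.) *)
Definition Phi (l : nat) (lam : seq nat) : seq nat :=
  [seq nth 0 lam x.-1 | x <- iota 1 (size lam)
     & hook lam x 1 != hook lam 1 1 %[mod l]].

Definition psi (c : seq int) : seq int :=
  match c with
  | [::] => [::]
  | x :: s => (last x s + 1)%R :: belast x s
  end.

(* Main.v *)
Require Import Defs.
From mathcomp Require Import all_boot all_order all_algebra.
Import Order.TTheory GRing.Theory Num.Theory.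
From mathcomp Require Import zify.
Local Open Scope ring_scope.

Lemma zind (L : int) (Q : int -> Prop) :
  Q L -> (forall U, L <= U -> Q U -> Q (U + 1)) -> forall U, L <= U -> Q U.
Proof.
move=> h0 hS U hU.
have -> : U = L + (`|U - L|%N)%:Z by lia.
elim: `|U - L|%N => [|n IH]; first by rewrite addr0.
have -> : L + (n.+1)%:Z = (L + n%:Z) + 1 by lia.
apply: hS => //; lia.
Qed.

Lemma zrange0 L : zrange L L = [::].
Proof. by rewrite /zrange subrr. Qed.

Lemma zrangeS L U : L <= U -> zrange L (U + 1) = rcons (zrange L U) U.
Proof.
move=> h; rewrite /zrange.
have -> : absz (U + 1 - L)%R = (absz (U - L)%R).+1 by lia.
rewrite -addn1 iotaD map_cat add0n /= cats1; congr rcons; lia.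
Qed.

Lemma size_zrange L U : size (zrange L U) = `|U - L|%N.
Proof. by rewrite size_map size_iota. Qed.

Lemma mem_zrange L U x : L <= U -> (x \in zrange L U) = (L <= x < U).
Proof.
move: U; apply: (zind L) => [|U hU IH]; first by rewrite zrange0 in_nil; lia.
rewrite zrangeS // mem_rcons in_cons IH.
case: eqP => [->|ne] /=; lia.
Qed.

Lemma zrange_cat L M U : L <= M -> M <= U -> zrange L U = zrange L M ++ zrange M U.
Proof.
move=> h1; move: U; apply: (zind M) => [|U hU IH]; first by rewrite zrange0 cats0.
rewrite !zrangeS //; last lia. by rewrite IH rcons_cat.
Qed.

Lemma sorted_zrange L U : sorted <%R (zrange L U).
Proof.
rewrite /zrange sorted_map.
apply: (sub_sorted _ (iota_ltn_sorted 0 _)) => x y /=; lia.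
Qed.

Definition cnt (P : int -> bool) (L x : int) : nat :=
  count (fun y => ~~ P y) (zrange L x).

Lemma cntS P L x : L <= x -> cnt P L (x + 1) = (cnt P L x + ~~ P x)%N.
Proof. by move=> h; rewrite /cnt zrangeS // -cats1 count_cat /= addn0. Qed.

Lemma cnt_cat P L M x : L <= M -> M <= x -> cnt P L x = (cnt P L M + cnt P M x)%N.
Proof. by move=> h1 h2; rewrite /cnt (@zrange_cat L M x h1 h2) count_cat. Qed.

Lemma cnt0 (P : int -> bool) (L x : int) : L <= x -> (forall y, L <= y < x -> P y) -> cnt P L x = 0%N.
Proof.
move=> h hP; apply/eqP; rewrite eqn0Ngt -has_count; apply/hasPn => y.
rewrite mem_zrange // => /hP ->; done.
Qed.

Lemma cnt_mono P L x y : L <= x -> x <= y -> (cnt P L x <= cnt P L y)%N.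
Proof. by move=> h1 h2; rewrite (@cnt_cat P L x y h1 h2) leq_addr. Qed.

Definition gbeads (P : int -> bool) (L U : int) :=
  [seq x <- zrange L U | P x && (0 < cnt P L x)%N].

Lemma piM_beads m c : piM m c =
  sort geq (map (cnt (inX m c) (lowX m c)) (gbeads (inX m c) (lowX m c) (upX m c))).
Proof.
rewrite /piM /gbeads; congr sort.
rewrite filter_map -filter_predI; congr map; apply: eq_filter => x /=.
by rewrite andbC.
Qed.

Lemma gbeads_sorted P L U : sorted <%R (gbeads P L U).
Proof. exact: lt_sorted_filter (sorted_zrange L U). Qed.

Lemma mem_gbeads P L U x : L <= U ->
  (x \in gbeads P L U) = [&& L <= x < U, P x & (0 < cnt P L x)%N].
Proof. by move=> h; rewrite mem_filter mem_zrange // andbC. Qed.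

Lemma gbeads_ge P L U x : L <= U -> x \in gbeads P L U -> L <= x.
Proof. by move=> h; rewrite mem_gbeads // => /and3P[/andP[]]. Qed.

Lemma gbeads_incr P L U : L <= U -> sorted leq (map (cnt P L) (gbeads P L U)).
Proof.
move=> h.
apply: (homo_sorted_in (P := [pred x | L <= x]) (e := <%R)); last first.
- exact: gbeads_sorted.
- by apply/allP => x /(@gbeads_ge P L U x h).
move=> x y /= hx hy hxy; apply: cnt_mono => //; exact: ltW.
Qed.

Lemma sort_geq_rev (s : seq nat) : sorted leq s -> sort geq s = rev s.
Proof.
move=> hs; apply: (sorted_eq (leT := geq)).
- by move=> x y z /= h1 h2; apply: leq_trans h2 h1.
- by move=> x y /andP[h1 h2]; apply/eqP; rewrite eqn_leq; apply/andP; split.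
- by apply: sort_sorted => x y; apply: leq_total.
- by rewrite rev_sorted.
by rewrite perm_sort perm_sym perm_rev.
Qed.

Lemma count3 (T : Type) (s : seq T) (a b c : pred T) :
  (forall x, a x + b x + c x = 1)%N -> (count a s + count b s + count c s)%N = size s.
Proof.
move=> h; elim: s => //= x s IH.
have := h x; lia.
Qed.

Lemma hookconst P L U b : L <= U -> b \in gbeads P L U ->
  ((cnt P L b + count (fun y : int => (y < b)%R) (gbeads P L U))%N%:Z =
   b - L - (count (fun y => P y && (cnt P L y == 0%N)) (zrange L U))%:Z).
Proof.
move=> h hb; move: (hb); rewrite mem_gbeads // => /and3P[/andP[hLb hbU] Pb gb].
have zc := @zrange_cat L b U hLb (ltW hbU).
have e1 : count (fun y => y < b) (gbeads P L U) =
          count (fun x => P x && (0 < cnt P L x)%N) (zrange L b).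
  rewrite /gbeads zc filter_cat count_cat.
  have -> : count (fun y => y < b) [seq x <- zrange b U | P x && (0 < cnt P L x)%N] = 0%N.
    apply/eqP; rewrite eqn0Ngt -has_count; apply/hasPn => y.
    rewrite mem_filter mem_zrange; last exact: ltW.
    by case/andP => _; lia.
  rewrite addn0 count_filter; apply: eq_in_count => y.
  rewrite mem_zrange // => hy /=; rewrite (_ : (y < b) = true) //; lia.
have e2 : count (fun y => P y && (cnt P L y == 0%N)) (zrange L U) =
          count (fun y => P y && (cnt P L y == 0%N)) (zrange L b).
  rewrite zc count_cat.
  have -> : count (fun y => P y && (cnt P L y == 0%N)) (zrange b U) = 0%N.
    apply/eqP; rewrite eqn0Ngt -has_count; apply/hasPn => y.
    rewrite mem_zrange; last exact: ltW.
    case/andP => hy _; apply/negP => /andP[_ /eqP h0].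
    have := @cnt_mono P L b y hLb hy; lia.
  by rewrite addn0.
have e3 := @count3 _ (zrange L b) (fun y => ~~ P y) (fun x => P x && (0 < cnt P L x)%N)
               (fun y => P y && (cnt P L y == 0%N)).
rewrite size_zrange in e3.
have e4 : forall x : int, (~~ P x + (P x && (0 < cnt P L x)%N) + (P x && (cnt P L x == 0%N)))%N = 1%N.
  by move=> x; case: (P x) => //=; case: (cnt P L x).
move: (e3 e4); rewrite /cnt in e1 e2 *; rewrite e1 e2; lia.
Qed.

Lemma natmod_dvdz (d m n : nat) :
  (m == n %[mod d])%N = (d%:Z %| m%:Z - n%:Z)%Z.
Proof. by rewrite -eqz_mod_dvd !modz_nat eqz_nat. Qed.

Lemma Phi_gen (l : nat) (lam : seq nat) (t : seq int) (K : int) :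
  all (fun r => 0 < r)%N lam ->
  (forall k, (k < size lam)%N ->
     ((nth 0 lam k + (size lam - k.+1))%N%:Z = nth 0 t k + K)) ->
  Phi l lam = [seq nth 0%N lam k | k <- iota 0 (size lam) &
                 ~~ (l%:Z %| nth 0 t k - nth 0 t 0)%Z].
Proof.
move=> hpos hK.
have hook_eq : forall k, (k < size lam)%N ->
    hook lam k.+1 1 = (nth 0 lam k + (size lam - k.+1))%N.
  move=> k hk; rewrite /hook /=.
  have hp : (0 < nth 0 lam k)%N by apply: (allP hpos); rewrite mem_nth.
  have -> : count (fun r => 1 <= r)%N (drop k.+1 lam) = size (drop k.+1 lam).
    apply/eqP; rewrite -all_count.
    by move: hpos; rewrite -{1}(cat_take_drop k.+1 lam) all_cat => /andP[].
  rewrite size_drop; lia.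
rewrite /Phi (iotaDl 1 0) filter_map -map_comp.
congr map; apply: eq_in_filter => k; rewrite mem_iota add0n => /andP[_ hk] /=.
have h0 : (0 < size lam)%N by lia.
rewrite (hook_eq k hk) (hook_eq 0%N h0) natmod_dvdz (hK k hk) (hK 0%N h0).
by rewrite opprD addrACA subrr addr0.
Qed.

Lemma Phi_beads P L U l : L <= U ->
  Phi l (rev (map (cnt P L) (gbeads P L U))) =
  rev (map (cnt P L) [seq b <- gbeads P L U |
                       ~~ (l%:Z %| b - last 0 (gbeads P L U))%Z]).
Proof.
move=> hLU.
set B := gbeads P L U; set g := cnt P L.
have sB : sorted <%R B := gbeads_sorted P L U.
case hB : B => [|b0 B'].
  by rewrite /Phi /=.
rewrite -hB.
set E := count (fun y => P y && (cnt P L y == 0%N)) (zrange L U).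
set RB := rev B.
have hsz : size (rev (map g B)) = size B by rewrite size_rev size_map.
rewrite (@Phi_gen l (rev (map g B)) RB (- L - E%:Z)); first last.
- move=> k; rewrite hsz => hk.
  have hkR : (k < size RB)%N by rewrite size_rev.
  rewrite -map_rev (nth_map 0 _ _ hkR) /RB nth_rev //.
  set i := (size B - k.+1)%N.
  have hi : (i < size B)%N by rewrite /i; lia.
  have hc := count_lt_nth 0 sB hi.
  have hm : nth 0 B i \in B by rewrite mem_nth.
  have := @hookconst P L U (nth 0 B i) hLU hm.
  rewrite -/B -/g -/E hc => ->; lia.
- apply/allP => r; rewrite mem_rev => /mapP[x hx ->].
  by move: hx; rewrite mem_gbeads // => /and3P[].
rewrite hsz.
have -> : [seq nth 0%N (rev (map g B)) k | k <- iota 0 (size B) &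
            ~~ (l%:Z %| nth 0 RB k - nth 0 RB 0)%Z] =
          map g (map (nth 0 RB) [seq k <- iota 0 (size B) |
            ~~ (l%:Z %| nth 0 RB k - nth 0 RB 0)%Z]).
  rewrite -map_comp; apply/eq_in_map => k; rewrite mem_filter mem_iota => /andP[_ hk].
  have hkR : (k < size RB)%N by rewrite size_rev; lia.
  by rewrite -map_rev (nth_map 0 _ _ hkR).
have key : forall q : pred int,
    [seq nth 0 RB k | k <- [seq k <- iota 0 (size B) | q (nth 0 RB k)]] = [seq x <- RB | q x].
  move=> q; rewrite -(size_rev B) -/RB.
  rewrite [in RHS](_ : RB = [seq nth 0 RB k | k <- iota 0 (size RB)]) ?filter_map //.
  by rewrite -/(mkseq _ _) mkseq_nth.
rewrite (key (fun b => ~~ (l%:Z %| b - nth 0 RB 0)%Z)).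
have -> : nth 0 RB 0 = last 0 B.
  rewrite /RB nth_rev; last by rewrite hB.
  by rewrite subn1 nth_last.
by rewrite /RB filter_rev map_rev.
Qed.

Lemma divmodU (m q r : int) : 0 < m -> 0 <= r < m ->
  ((q * m + r) %/ m)%Z = q /\ ((q * m + r) %% m)%Z = r.
Proof.
move=> hm hr; have m0 : m != 0 by lia.
split; first by rewrite divzMDl // divz_small ?addr0 //; lia.
by rewrite modzMDl modz_small.
Qed.

Lemma divmodP (m y : int) : 0 < m -> exists q r,
  [/\ y = q * m + r, 0 <= r < m, (y %/ m)%Z = q & (y %% m)%Z = r].
Proof.
move=> hm; exists (y %/ m)%Z, (y %% m)%Z; split => //.
- exact: divz_eq.
- apply/andP; split; [apply: modz_ge0; lia | exact: ltz_pmod].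
Qed.

Lemma inXE (m : nat) (c : seq int) (y : int) : (0 < m)%N ->
  inX m c y = ((y %/ m%:Z)%Z <= nth 0 c (absz (y %% m%:Z)%Z)).
Proof.
move=> hm; have hm' : 0 < m%:Z by lia.
have [q [r [ey hr -> ->]]] := @divmodP m%:Z y hm'.
rewrite /inX; apply/hasP/idP.
- case=> j; rewrite mem_iota add0n => /andP[_ hj] /andP[/dvdzP[k hk] hle].
  have ej : y - j%:Z = k * m%:Z by [].
  have hk1 : ((y - j%:Z) %/ m%:Z)%Z = k by rewrite ej mulzK //; lia.
  rewrite hk1 in hle.
  have [e1 e2] := @divmodU m%:Z k j%:Z hm' ltac:(lia).
  have ey2 : y = k * m%:Z + j%:Z by lia.
  rewrite ey2 in ey.
  have [f1 f2] := @divmodU m%:Z q r hm' hr.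
  rewrite -ey in f1 f2. rewrite e1 in f1; rewrite e2 in f2.
  rewrite -f1 -f2 /=; exact: hle.
- move=> h; exists (absz r).
    rewrite mem_iota add0n; apply/andP; split => //; lia.
  apply/andP; split.
    apply/dvdzP; exists q; lia.
  have -> : y - (absz r)%:Z = q * m%:Z by lia.
  by rewrite mulzK //; lia.
Qed.

Lemma sabs_ge0 c : 0 <= sabs c.
Proof. elim: c => //= x s IH; lia. Qed.

Lemma sabs_nth c j : `|nth 0 c j| <= sabs c.
Proof.
elim: c j => [|x s IH] j; first by rewrite nth_nil normr0.
case: j => [|j] /=; first by have := sabs_ge0 s; lia.
by apply: ler_wpDl; [exact: normr_ge0 | exact: IH].
Qed.

Lemma sabs_nth2 c j : - sabs c <= nth 0 c j <= sabs c.
Proof.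
have h := sabs_nth c j; have h2 := ler_norm (nth 0 c j); have h3 := ler_norm (- nth 0 c j).
rewrite normrN in h3; apply/andP; split.
- rewrite lerNl; exact: le_trans h3 h.
- exact: le_trans h2 h.
Qed.

Lemma inX_low m c y : (0 < m)%N -> y < lowX m c -> inX m c y.
Proof.
move=> hm hy; rewrite inXE //.
have hm' : 0 < m%:Z by lia.
have [q [r [ey hr -> ->]]] := @divmodP m%:Z y hm'.
have := sabs_nth2 c (absz r); move: hy; rewrite /lowX => hy hn.
have h1 : (q + sabs c) * m%:Z < 0 by lia.
have h2 : q + sabs c < 0 by rewrite pmulr_llt0 in h1.
lia.
Qed.

Lemma inX_high m c y : (0 < m)%N -> upX m c <= y -> ~~ inX m c y.
Proof.
move=> hm hy; rewrite inXE // -ltNge.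
have hm' : 0 < m%:Z by lia.
have [q [r [ey hr -> ->]]] := @divmodP m%:Z y hm'.
have := sabs_nth2 c (absz r); move: hy; rewrite /upX => hy hn.
have h1 : 0 < (q - sabs c) * m%:Z by lia.
have h2 : 0 < q - sabs c by rewrite pmulr_lgt0 in h1.
lia.
Qed.

Lemma lowX_le0 m c : lowX m c <= 0.
Proof. have := sabs_ge0 c; rewrite /lowX; nia. Qed.

Lemma upX_ge0 m c : 0 <= upX m c.
Proof. have := sabs_ge0 c; rewrite /upX; nia. Qed.

Lemma size_psi c : size (psi c) = size c.
Proof. by case: c => //= x s; rewrite size_belast. Qed.

Lemma sum_psi c : c != [::] -> \sum_(x <- psi c) x = \sum_(x <- c) x + 1.
Proof.
case: c => // x s _ /=.
rewrite big_cons (lastI x s) big_rcons /=.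
by rewrite [LHS]addrC addrA.
Qed.

Lemma nth_psi c j : (j < size c)%N ->
  nth 0 (psi c) j = if j == 0%N then last 0 c + 1 else nth 0 c j.-1.
Proof.
case: c => // x s hj /=.
case: j hj => //= j hj.
rewrite (lastI x s) nth_rcons size_belast. have -> : (j < size s)%N by rewrite /= ltnS in hj. done.
Qed.

Lemma inX_psi m c y : (0 < m)%N -> size c = m -> inX m (psi c) y = inX m c (y - 1).
Proof.
move=> hm hs; rewrite !inXE //.
have hm' : 0 < m%:Z by lia.
have [q [r [ey hr -> ->]]] := @divmodP m%:Z y hm'.
rewrite nth_psi; last by rewrite hs; lia.
case: eqP => hr0.
- have [e1 e2] := @divmodU m%:Z (q - 1) (m%:Z - 1) hm' ltac:(lia).
  have ey1 : y - 1 = (q - 1) * m%:Z + (m%:Z - 1) by lia.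
  rewrite ey1 e1 e2 -nth_last hs.
  have -> : absz (m%:Z - 1) = m.-1 by lia.
  apply/idP/idP; lia.
- have [e1 e2] := @divmodU m%:Z q (r - 1) hm' ltac:(lia).
  have ey1 : y - 1 = q * m%:Z + (r - 1) by lia.
  rewrite ey1 e1 e2.
  have -> : absz (r - 1) = (absz r).-1 by lia.
  done.
Qed.

Lemma inX_iter m c k y : (0 < m)%N -> size c = m ->
  inX m (iter k psi c) y = inX m c (y - k%:Z).
Proof.
move=> hm hs; elim: k y => [|k IH] y /=; first by rewrite subr0.
rewrite inX_psi //; last by elim: (k) => //= n <-; rewrite size_psi.
rewrite IH; congr inX; lia.
Qed.

Lemma size_iter k c : size (iter k psi c) = size c.
Proof. by elim: k => //= k <-; rewrite size_psi. Qed.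

Lemma sum_iter k c : c != [::] ->
  \sum_(x <- iter k psi c) x = \sum_(x <- c) x + k%:Z.
Proof.
move=> hc; elim: k => /= [|k IH]; first by rewrite addr0.
rewrite sum_psi ?IH; first lia.
by rewrite -size_eq0 size_iter size_eq0.
Qed.

Definition spread (l i : nat) (w : int) : int :=
  ((w %/ (l.-1)%:Z)%Z * l%:Z +
   (if (absz (w %% (l.-1)%:Z)%Z < i)%N then (absz (w %% (l.-1)%:Z)%Z)%:Z
    else (absz (w %% (l.-1)%:Z)%Z).+1%:Z)).

Lemma spreadP (l i : nat) (w : int) : (2 <= l)%N -> (i < l)%N ->
  exists q (r : nat), [/\ w = q * (l.-1)%:Z + r%:Z, (r < l.-1)%N &
    spread l i w = q * l%:Z + (if (r < i)%N then r%:Z else r.+1%:Z)].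
Proof.
move=> hl hi; have hm : 0 < (l.-1)%:Z by lia.
have [q [r [ey hr e1 e2]]] := @divmodP (l.-1)%:Z w hm.
exists q, (absz r); split.
- by rewrite ey; congr (_ + _); lia.
- lia.
- by rewrite /spread e1 e2.
Qed.

Lemma spread_mod l i w : (2 <= l)%N -> (i < l)%N ->
  ((spread l i w %/ l%:Z)%Z, (spread l i w %% l%:Z)%Z) =
  ((w %/ (l.-1)%:Z)%Z, (if (absz (w %% (l.-1)%:Z)%Z < i)%N then (absz (w %% (l.-1)%:Z)%Z)%:Z
    else (absz (w %% (l.-1)%:Z)%Z).+1%:Z)).
Proof.
move=> hl hi; have hl' : 0 < l%:Z by lia.
have hm : 0 < (l.-1)%:Z by lia.
have [q [r [ey hr e1 e2]]] := @divmodP (l.-1)%:Z w hm.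
rewrite /spread e1 e2.
have hf : 0 <= (if (absz r < i)%N then (absz r)%:Z else (absz r).+1%:Z) < l%:Z.
  case: ifP => _; lia.
by have [-> ->] := @divmodU l%:Z q _ hl' hf.
Qed.

Lemma spread_val l i q (r : nat) : (2 <= l)%N -> (r < l.-1)%N ->
  spread l i (q * (l.-1)%:Z + r%:Z) = q * l%:Z + (if (r < i)%N then r%:Z else r.+1%:Z).
Proof.
move=> hl hr; have hm : 0 < (l.-1)%:Z by lia.
have [e1 e2] := @divmodU (l.-1)%:Z q r%:Z hm ltac:(lia).
by rewrite /spread e1 e2 absz_nat.
Qed.

Lemma decomp l w : (2 <= l)%N -> exists q (r : nat), w = q * (l.-1)%:Z + r%:Z /\ (r < l.-1)%N.
Proof.
move=> hl; have hm : 0 < (l.-1)%:Z by lia.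
have [q [r [ey hr _ _]]] := @divmodP (l.-1)%:Z w hm.
exists q, (absz r); split; last lia.
rewrite ey; congr (_ + _); lia.
Qed.

Lemma mull_split l (q : int) : (1 <= l)%N -> q * l%:Z = q * (l.-1)%:Z + q.
Proof.
move=> hl; have -> : l%:Z = (l.-1)%:Z + 1 by lia.
by rewrite mulrDr mulr1.
Qed.

Lemma modl_eq l (q : int) (r : nat) : (r < l)%N -> ((q * l%:Z + r%:Z) %% l%:Z)%Z = r%:Z.
Proof. move=> hr; have [_ ->] := @divmodU l%:Z q r%:Z ltac:(lia) ltac:(lia); done. Qed.

Lemma spread_notres l i w : (2 <= l)%N -> (i < l)%N -> ((spread l i w %% l%:Z)%Z != i%:Z).
Proof.
move=> hl hi; have [q [r [-> hr]]] := @decomp l w hl.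
rewrite spread_val //; case: ltnP => hri.
- rewrite modl_eq; lia.
- rewrite modl_eq; lia.
Qed.

Lemma spread_inX l i a w : (2 <= l)%N -> (i < l)%N -> size a = l ->
  inX l.-1 (take i a ++ drop i.+1 a) w = inX l a (spread l i w).
Proof.
move=> hl hi hs; rewrite !inXE //; try lia.
have hl' : 0 < l%:Z by lia.
have [q [r [-> hr]]] := @decomp l w hl.
have hm : 0 < (l.-1)%:Z by lia.
have [e1 e2] := @divmodU (l.-1)%:Z q r%:Z hm ltac:(lia).
rewrite e1 e2 spread_val // absz_nat.
have hf : 0 <= (if (r < i)%N then r%:Z else r.+1%:Z) < l%:Z by case: ifP => _; lia.
have [-> ->] := @divmodU l%:Z q _ hl' hf.
rewrite nth_cat size_take hs hi.
case: ltnP => hri /=.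
- by rewrite nth_take.
- by rewrite nth_drop; congr (_ <= nth _ _ _); lia.
Qed.

Lemma spread_step l i w : (2 <= l)%N -> (i < l)%N ->
  spread l i (w + 1) = spread l i w + 1 \/
  (spread l i (w + 1) = spread l i w + 2 /\ ((spread l i w + 1) %% l%:Z)%Z = i%:Z).
Proof.
move=> hl hi; have [q [r [-> hr]]] := @decomp l w hl.
have hq := @mull_split l q ltac:(lia).
rewrite (@spread_val l i q r hl hr).
case: (ltnP r.+1 l.-1) => hr1.
- have -> : q * (l.-1)%:Z + r%:Z + 1 = q * (l.-1)%:Z + (r.+1)%:Z by lia.
  rewrite (@spread_val l i q r.+1 hl hr1).
  case: (ltnP r.+1 i) => h1.
  + left; have -> : (r < i)%N by lia. lia.
  case: (ltnP r i) => h2.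
  + right; split; first lia.
    have -> : q * l%:Z + r%:Z + 1 = q * l%:Z + i%:Z by lia.
    by rewrite modl_eq.
  + left; lia.
- have -> : q * (l.-1)%:Z + r%:Z + 1 = (q + 1) * (l.-1)%:Z + 0%N%:Z.
    have -> : r = (l.-1).-1 by lia.
    rewrite mulrDl mul1r; lia.
  have hm0 : (0 < l.-1)%N by lia.
  rewrite (@spread_val l i (q + 1) 0 hl hm0) mulrDl mul1r.
  have er : r = (l.-1).-1 by lia.
  case: (posnP i) => hi0.
  + right; rewrite hi0 /=; split.
    * lia.
    * have -> : q * l%:Z + r.+1%:Z + 1 = (q + 1) * l%:Z + 0%N%:Z by rewrite mulrDl mul1r; lia.
      rewrite modl_eq //; lia.
  + idtac.
    case: (ltnP r i) => h2.
    * right; split; first lia.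
      have -> : q * l%:Z + r%:Z + 1 = q * l%:Z + i%:Z by lia.
      by rewrite modl_eq.
    * left; lia.
Qed.

Lemma spread_surj l i x : (2 <= l)%N -> (i < l)%N -> ((x %% l%:Z)%Z != i%:Z) ->
  exists w, spread l i w = x.
Proof.
move=> hl hi hx; have hl' : 0 < l%:Z by lia.
have [q [r [ey hr e1 e2]]] := @divmodP l%:Z x hl'.
rewrite e2 in hx.
case: (ltnP (absz r) i) => h.
- exists (q * (l.-1)%:Z + (absz r)%:Z).
  rewrite spread_val //; last lia.
  rewrite h ey; congr (_ + _); lia.
- exists (q * (l.-1)%:Z + ((absz r).-1)%:Z).
  rewrite spread_val //; last lia.
  have -> : ((absz r).-1 < i)%N = false by lia.
  rewrite ey; congr (_ + _); lia.
Qed.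

Lemma spread_neg l i w : (2 <= l)%N -> (i < l)%N -> w < 0 -> spread l i w <= w.
Proof.
move=> hl hi hw; have [q [r [ew hr]]] := @decomp l w hl.
have hq := @mull_split l q ltac:(lia).
rewrite ew spread_val //.
have hm : 0 < (l.-1)%:Z by lia.
have hq0 : q < 0.
  have h1 : q * (l.-1)%:Z < 0 by lia.
  by rewrite pmulr_llt0 in h1.
case: ifP => _; lia.
Qed.

Lemma spread_mono l i w w' : (2 <= l)%N -> (i < l)%N -> w < w' -> spread l i w < spread l i w'.
Proof.
move=> hl hi hw.
have : w + 1 <= w' by lia.
clear hw; move: w'; apply: (zind (w + 1)) => [|u hu IH].
- by case: (@spread_step l i w hl hi) => [|[]] ->; lia.
- by case: (@spread_step l i u hl hi) => [|[]] ->; lia.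
Qed.

Lemma last_max (s : seq int) x : sorted <%R s -> x \in s -> x <= last 0 s.
Proof.
elim: s => // y s IH /= hs; rewrite inE => /orP[/eqP->|hx].
- case: s hs {IH} => [|z s] hs //=.
  have /allP h := order_path_min lt_trans hs.
  by apply: ltW; apply: h; exact: mem_last.
- case: s hs IH hx => // z s hs IH hx /=.
  exact: (IH (path_sorted hs) hx).
Qed.

Lemma last_in (s : seq int) x0 : s != [::] -> last x0 s \in s.
Proof. by case: s => // y s _; rewrite /= mem_last. Qed.

Lemma sum_split (a : seq int) i : (i < size a)%N ->
  \sum_(x <- a) x = \sum_(x <- take i a ++ drop i.+1 a) x + nth 0 a i.
Proof.
move=> hi; rewrite -{1}(cat_take_drop i a) (drop_nth 0 hi) !big_cat big_cons /=.
by rewrite -addrA [_ + nth 0 a i]addrC.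
Qed.

Lemma sum_lt0 (a : seq int) : a != [::] -> (forall x, x \in a -> x < 0) -> \sum_(x <- a) x < 0.
Proof.
elim: a => // x s IH _ h; rewrite big_cons.
have hx : x < 0 by apply: h; rewrite inE eqxx.
case: s IH h => [|y s] IH h; first by rewrite big_nil addr0.
have := IH isT (fun z hz => h z (@mem_behead _ (x :: y :: s) z hz)) => hS; rewrite -[0]addr0; exact: ltrD.
Qed.

Lemma P_bound l a i y : (2 <= l)%N -> (i < l)%N ->
  (forall j, (j < l)%N -> nth 0 a j <= nth 0 a i) ->
  (forall j, (i < j < l)%N -> nth 0 a j < nth 0 a i) ->
  inX l a y -> y <= nth 0 a i * l%:Z + i%:Z.
Proof.
move=> hl hi hmax hlast; rewrite inXE; last lia.
have hl' : 0 < l%:Z by lia.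
have [q [r [ey hr -> ->]]] := @divmodP l%:Z y hl'.
move=> hq.
case: (leqP (absz r) i) => hri.
- have hqM : q <= nth 0 a i by apply: le_trans hq (hmax _ _); lia.
  have : q * l%:Z <= nth 0 a i * l%:Z by rewrite ler_pM2r.
  lia.
- have hqM : q <= nth 0 a i - 1.
    have := hlast (absz r); rewrite hri /= => /(_ ltac:(lia)) => h; rewrite lerBrDr -ltzD1; rewrite ltrD2r; exact: le_lt_trans hq h.
  have : q * l%:Z <= (nth 0 a i - 1) * l%:Z by rewrite ler_pM2r.
  rewrite mulrBl mul1r; lia.
Qed.

Lemma P_res l a i y : (2 <= l)%N -> (i < l)%N ->
  (y %% l%:Z)%Z = i%:Z -> y <= nth 0 a i * l%:Z + i%:Z -> inX l a y.
Proof.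
move=> hl hi hy hb; rewrite inXE; last lia.
have hl' : 0 < l%:Z by lia.
rewrite hy absz_nat.
have [q [r [ey hr e1 e2]]] := @divmodP l%:Z y hl'.
rewrite e1; rewrite e2 in hy; subst r.
have : q * l%:Z <= nth 0 a i * l%:Z by lia.
by rewrite ler_pM2r.
Qed.

Lemma GK (P Q : int -> bool) (phi : int -> int) (B' x1 : int) (l i : nat) :
  (forall z, Q z = P (phi z)) ->
  (forall z : int, phi (z + 1) = phi z + 1 \/
     (phi (z + 1) = phi z + 2 /\ ((phi z + 1) %% l%:Z)%Z = i%:Z)) ->
  (forall z z' : int, z <= z' -> phi z <= phi z') ->
  (forall y, (y %% l%:Z)%Z = i%:Z -> y <= x1 -> P y) ->
  forall z, B' <= z -> phi z <= x1 + 1 -> cnt Q B' z = cnt P (phi B') (phi z).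
Proof.
move=> hQ hst hmo hres; apply: (zind B') => [|z hz IH] hb.
  by rewrite /cnt !zrange0.
have hm := hmo B' z hz.
have hzz : phi z < phi (z + 1) by case: (hst z) => [->|[-> _]]; lia.
rewrite cntS // IH; last lia.
case: (hst z) => [e|[e hmod]]; rewrite e.
- by rewrite cntS // hQ.
- have -> : phi z + 2 = (phi z + 1) + 1 by lia.
  rewrite cntS; last lia.
  rewrite cntS // hQ (hres (phi z + 1) hmod); last lia.
  by rewrite addn0.
Qed.

Lemma main_eq l a i M c : (2 <= l)%N -> size a = l -> (i < l)%N ->
  (forall j, (j < l)%N -> nth 0 a j <= nth 0 a i) ->
  (forall j, (i < j < l)%N -> nth 0 a j < nth 0 a i) ->
  nth 0 a i = M -> 0 <= M ->
  c = iter (absz M) psi (take i a ++ drop i.+1 a) ->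
  piM l.-1 c = Phi l (piM l a).
Proof.
move=> hl hs hi hmax hlast hMd hM0 hc.
have hl1 : (0 < l.-1)%N by lia.
have hl0 : (0 < l)%N by lia.
have hsd : size (take i a ++ drop i.+1 a) = l.-1.
  rewrite size_cat size_take size_drop hs hi; lia.
have hsc : size c = l.-1 by rewrite hc size_iter.
pose phi := fun z : int => spread l i (z - M).
have hQP : forall z : int, inX l.-1 c z = inX l a (phi z).
  move=> z; rewrite hc inX_iter // spread_inX //.
  by rewrite /phi; congr (inX _ _ (spread _ _ _)); lia.
have hPb : forall y : int, inX l a y -> y <= M * l%:Z + i%:Z.
  by move=> y hy; rewrite -hMd; exact: (@P_bound l a i y hl hi hmax hlast hy).
have hPr : forall y : int, (y %% l%:Z)%Z = i%:Z -> y <= M * l%:Z + i%:Z -> inX l a y.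
  by move=> y h1 h2; apply: (@P_res l a i y hl hi h1); rewrite hMd.
have hx1m : ((M * l%:Z + i%:Z) %% l%:Z)%Z = i%:Z by rewrite modl_eq.
have hx1 : inX l a (M * l%:Z + i%:Z) by apply: hPr.
have hst : forall z : int, phi (z + 1) = phi z + 1 \/
     (phi (z + 1) = phi z + 2 /\ ((phi z + 1) %% l%:Z)%Z = i%:Z).
  move=> z; rewrite /phi (_ : z + 1 - M = (z - M) + 1); last lia.
  exact: spread_step.
have hsm : forall z z' : int, z < z' -> phi z < phi z'.
  by move=> z z' h; apply: spread_mono => //; lia.
have hmo : forall z z' : int, z <= z' -> phi z <= phi z'.
  move=> z z'; rewrite le_eqVlt => /orP[/eqP->//|h]; exact: ltW (hsm _ _ h).
pose L := lowX l a; pose U := upX l a.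
pose LQ := lowX l.-1 c; pose UQ := upX l.-1 c.
have hL0 : L <= 0 by exact: lowX_le0.
have hU0 : 0 <= U by exact: upX_ge0.
have hLQ0 : LQ <= 0 by exact: lowX_le0.
have hUQ0 : 0 <= UQ by exact: upX_ge0.
have hLU : L <= U by lia.
have hLQU : LQ <= UQ by lia.
have lowP : forall y : int, y < L -> inX l a y by move=> y; exact: inX_low.
have highP : forall y : int, U <= y -> ~~ inX l a y by move=> y; exact: inX_high.
have lowQ : forall y : int, y < LQ -> inX l.-1 c y by move=> y; exact: inX_low.
have highQ : forall y : int, UQ <= y -> ~~ inX l.-1 c y by move=> y; exact: inX_high.
pose B' := LQ + L - 1 - M.
have hphiB : phi B' <= L.
  rewrite /phi; apply: (le_trans (@spread_neg l i (B' - M) hl hi _)); rewrite /B'; lia.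
have hGK := @GK (inX l a) (inX l.-1 c) phi B' (M * l%:Z + i%:Z) l i hQP hst hmo hPr.
have hGP : forall x : int, L <= x -> cnt (inX l a) L x = cnt (inX l a) (phi B') x.
  move=> x hx; rewrite (@cnt_cat _ (phi B') L x hphiB hx) (@cnt0 _ (phi B') L) //.
  by move=> y /andP[_ hy]; apply: lowP.
have hGP0 : forall x : int, phi B' <= x -> x <= L -> cnt (inX l a) (phi B') x = 0%N.
  move=> x h1 h2; apply: cnt0 => // y hy; apply: lowP; lia.
have hBLQ : B' <= LQ by lia.
have hGQ : forall z : int, LQ <= z -> cnt (inX l.-1 c) LQ z = cnt (inX l.-1 c) B' z.
  move=> z hz; rewrite (@cnt_cat _ B' LQ z hBLQ hz) (@cnt0 _ B' LQ) //.
  by move=> y /andP[_ hy]; apply: lowQ.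
have hGQ0 : forall z : int, B' <= z -> z <= LQ -> cnt (inX l.-1 c) B' z = 0%N.
  move=> z h1 h2; apply: cnt0 => // y hy; apply: lowQ; lia.
pose B := gbeads (inX l a) L U.
pose BQ := gbeads (inX l.-1 c) LQ UQ.
have step1 : forall z : int, z \in BQ ->
    L <= phi z /\ cnt (inX l.-1 c) LQ z = cnt (inX l a) L (phi z).
  move=> z; rewrite mem_gbeads // => /and3P[/andP[h1 h2] hQz hcz].
  have hPz : inX l a (phi z) by rewrite -hQP.
  have hb := hPb _ hPz.
  have e1 : cnt (inX l.-1 c) LQ z = cnt (inX l a) (phi B') (phi z).
    rewrite hGQ // hGK //; lia.
  have hm := hmo B' z ltac:(lia).
  have hLz : L <= phi z.
    rewrite leNgt; apply/negP => hlt.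
    by move: hcz; rewrite e1 hGP0 //; lia.
  by split => //; rewrite e1 hGP.
have step2 : forall x : int,
    (x \in map phi BQ) = (x \in [seq b <- B | (b %% l%:Z)%Z != i%:Z]).
  move=> x; apply/mapP/idP.
  - case=> z hz ->; have [hLz e] := step1 z hz.
    move: hz; rewrite mem_gbeads // => /and3P[/andP[h1 h2] hQz hcz].
    have hPz : inX l a (phi z) by rewrite -hQP.
    rewrite mem_filter spread_notres // mem_gbeads // hPz -e hcz hLz /= andbT.
    by rewrite ltNge; apply/negP => /highP; rewrite hPz.
  - rewrite mem_filter => /andP[hxm]; rewrite mem_gbeads // => /and3P[/andP[h1 h2] hPx hcx].
    have [w hw] := @spread_surj l i x hl hi hxm.
    exists (w + M); last by rewrite /phi (_ : w + M - M = w) //; lia.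
    have ephi : phi (w + M) = x by rewrite /phi (_ : w + M - M = w) //; lia.
    have hQz : inX l.-1 c (w + M) by rewrite hQP ephi.
    have hb := hPb _ hPx.
    have hBz : B' <= w + M.
      rewrite leNgt; apply/negP => hlt.
      have := hsm _ _ hlt; rewrite ephi; lia.
    have e1 : cnt (inX l.-1 c) B' (w + M) = cnt (inX l a) L x.
      rewrite hGK // ?ephi //; first by rewrite hGP.
      lia.
    have hLQz : LQ <= w + M.
      rewrite leNgt; apply/negP => hlt.
      by move: hcx; rewrite -e1 hGQ0 //; lia.
    rewrite mem_gbeads // hQz hGQ // e1 hcx hLQz /= andbT.
    by rewrite ltNge; apply/negP => /highQ; rewrite hQz.
have sB : sorted <%R B := gbeads_sorted _ _ _.
have sBQ : sorted <%R BQ := gbeads_sorted _ _ _.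
have e3 : map phi BQ = [seq b <- B | (b %% l%:Z)%Z != i%:Z].
  apply: (irr_sorted_eq (leT := <%R) lt_trans ltxx).
  - rewrite sorted_map; apply: (sub_sorted _ sBQ) => x y /= h; exact: hsm.
  - exact: lt_sorted_filter.
  - exact: step2.
have e4 : [seq b <- B | ~~ (l%:Z %| b - last 0 B)%Z] = [seq b <- B | (b %% l%:Z)%Z != i%:Z].
  apply: eq_in_filter => b hbB.
  have hx1B : M * l%:Z + i%:Z \in B.
    move: (hbB); rewrite !mem_gbeads // => /and3P[/andP[h1 h2] hPb' hcb].
    have hb := hPb _ hPb'.
    rewrite hx1 /=; apply/andP; split.
    - apply/andP; split; first nia.
      by rewrite ltNge; apply/negP => /highP; rewrite hx1.
    - exact: (leq_trans hcb (@cnt_mono _ _ _ _ h1 hb)).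
  have hlast1 : last 0 B = M * l%:Z + i%:Z.
    apply/eqP; rewrite eq_le; apply/andP; split; last exact: last_max.
    apply: hPb.
    have hne : B != [::] by apply/eqP => hB; rewrite hB in hbB.
    move: (@last_in B 0 hne); rewrite mem_gbeads // => /and3P[].
    by [].
  rewrite hlast1 -eqz_mod_dvd hx1m.
  by [].
rewrite !piM_beads -/L -/U -/LQ -/UQ -/B -/BQ.
rewrite (@sort_geq_rev _ (@gbeads_incr _ _ _ hLQU)) (@sort_geq_rev _ (@gbeads_incr _ _ _ hLU)).
rewrite Phi_beads // -/B e4 -e3.
congr rev; rewrite -map_comp; apply/eq_in_map => z hz /=.
exact: (step1 z hz).2.
Qed.

Local Close Scope ring_scope.

(* i is 0-based here: the paper's index is i+1. *)
Theorem mainTheorem1 (l : nat) (a : seq int) (i : nat) :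
  (2 <= l)%N -> size a = l -> (\sum_(x <- a) x = 0)%R ->
  (i < l)%N ->
  (forall j, (j < l)%N -> (nth 0%R a j <= nth 0%R a i)%R) ->
  (forall j, (i < j < l)%N -> (nth 0%R a j < nth 0%R a i)%R) ->
  let lam := piM l a in
  let c := iter `|nth 0%R a i|%N psi (take i a ++ drop i.+1 a) in
  (\sum_(x <- c) x = 0)%R /\ piM l.-1 c = Phi l lam.
Proof.
move=> hl hs hsum hi hmax hlast lam c.
have hM0 : (0 <= nth 0 a i)%R.
  rewrite leNgt; apply/negP => hneg.
  have : (\sum_(x <- a) x < 0)%R.
    apply: sum_lt0; first by rewrite -size_eq0 hs; lia.
    move=> x /(nthP 0%R) [j hj <-]; have hjl : (j < l)%N by rewrite -hs. exact: le_lt_trans (hmax j hjl) hneg.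
  by rewrite hsum ltxx.
split.
- rewrite /c sum_iter; last first.
    by rewrite -size_eq0 size_cat size_take size_drop hs hi; lia.
  have hi' : (i < size a)%N by rewrite hs.
  have := @sum_split a i hi'; rewrite hsum => h0.
  have -> : ((absz (nth 0 a i))%:Z = nth 0 a i)%R by lia.
  by rewrite -h0.
- exact: (@main_eq l a i (nth 0%R a i) c hl hs hi hmax hlast erefl hM0 erefl).
Qed.
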